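(* Let $\mathcal{V}$ be a non-trivial quantale and $\mathsf{F}\colon\mathbf{Set}\to\mathbf{Set}$ a functor. The monotone map $\widehat{\mathsf{F}}^{(-)}\colon\mathbf{Pred}(\mathsf{F})_{\mathsf{M}}\to\mathbf{Lax}(\mathsf{F})$, sending a class of monotone predicate liftings to its Kantorovich extension, is right adjoint to the monotone map $\mathsf{M}\mathsf{P}\mathsf{I}\colon\mathbf{Lax}(\mathsf{F})\to\mathbf{Pred}(\mathsf{F})_{\mathsf{M}}$, and the latter is order-reflecting.
   Context: A quantale $(\mathcal{V},\otimes,k)$ is a complete lattice with commutative monoid structure, each $u\otimes-$ preserving joins, $\hom(u,-)$ its right adjoint; non-trivial: $\bot\ne\top$. $\mathcal{V}$-categories $(X,a)$: $k\le a(x,x)$, $a(x,y)\otimes a(y,z)\le a(x,z)$; $\mathcal{V}$-functors: $a(x,y)\le b(f x,f y)$; category $\mathbf{Cat}(\mathcal{V})$. $\mathcal{V}$-relations $r\colon X\nrightarrow Y$ are maps $X\times Y\to\mathcal{V}$, composed by $(s\cdot r)(x,z)=\bigvee_y r(x,y)\otimes s(y,z)$, converse $r^\circ(y,x)=r(x,y)$, pointwise order, functions as relations with value $k$ on the graph and $\bot$ elsewhere; $(r\multimap s)(z,y)=\bigwedge_x\hom(s(x,z),r(x,y))$. A lax extension $\widehat{\mathsf{F}}$ of $\mathsf{F}$ maps $r\colon X\nrightarrow Y$ to $\widehat{\mathsf{F}}r\colon\mathsf{F}X\nrightarrow\mathsf{F}Y$ with (L1) monotonicity, (L2) $\widehat{\mathsf{F}}s\cdot\widehat{\mathsf{F}}r\le\widehat{\mathsf{F}}(s\cdot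 r)$, (L3) $\mathsf{F}f\le\widehat{\mathsf{F}}f$, $(\mathsf{F}f)^\circ\le\widehat{\mathsf{F}}(f^\circ)$; $\mathsf{I}(\widehat{\mathsf{F}})$ is the induced lifting $(X,a)\mapsto(\mathsf{F}X,\widehat{\mathsf{F}}a)$. $\mathbf{Lax}(\mathsf{F})$ is ordered pointwise. A $\kappa$-ary $\mathcal{V}$-valued predicate lifting is a natural transformation $\lambda\colon\mathbf{Set}(-,\mathcal{V}^\kappa)\to\mathbf{Set}(\mathsf{F}-,\mathcal{V})$, viewed (identifying $f\colon X\to\mathcal{V}^\kappa$ with the relation $(i,x)\mapsto f(x)(i)$, and maps $\mathsf{F}X\to\mathcal{V}$ with relations $1\nrightarrow\mathsf{F}X$) as maps from relations $\kappa\nrightarrow X$ to relations $1\nrightarrow\mathsf{F}X$; monotone if components are pointwise monotone. $\mathbf{Pred}(\mathsf{F})_{\mathsf{M}}$ is the conglomerate of classes of monotone predicate liftings ordered by reverse inclusion ($\Lambda\le\Lambda'$ iff $\Lambda\supseteq\Lambda'$). For a lifting $\overline{\mathsf{F}}$ (functor on $\mathbf{Cat}(\mathcal{V})$ with $|\overline{\mathsf{F}}-|=\mathsf{F}|-|$), $\mathsf{P}(\overline{\mathsf{F}})$ is the class of predicate liftings $\lambda$ such that $\lambda_{|X|}(f)\colon\overline{\mathsf{F}}X\to(\mathcal{V},\hom)$ is a $\mathcal{V}$-functor for every $\mathcal{V}$-functor $f\colon X\to\mathcal{V}^\kappa$ ($\mathcal{V}^\kappa$ with $[f,g]=\bigwedge_i\hom(f(i),g(i))$),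 and $\mathsf{M}$ selects the monotone members of a class. The Kantorovich extension of a class $\Lambda$ of monotone predicate liftings is $\widehat{\mathsf{F}}^\Lambda r=\bigwedge_{\lambda\in\Lambda}\bigwedge_{g\colon\kappa\nrightarrow X}\lambda(r\cdot g)\multimap\lambda(g)$. *)

(* Defs.v *)
Set Implicit Arguments.
Unset Strict Implicit.

Record quantale := Quantale {
  qcar :> Type;
  qle : qcar -> qcar -> Prop;
  qsup : (qcar -> Prop) -> qcar;
  qten : qcar -> qcar -> qcar;
  qk : qcar;
  qhom : qcar -> qcar -> qcar;
  qle_refl : forall u, qle u u;
  qle_trans : forall u v w, qle u v -> qle v w -> qle u w;
  qle_antisym : forall u v, qle u v -> qle v u -> u = v;
  qsup_ub : forall (S : qcar -> Prop) s, S s -> qle s (qsup S);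
  qsup_least : forall (S : qcar -> Prop) u,
      (forall s, S s -> qle s u) -> qle (qsup S) u;
  qten_assoc : forall u v w, qten u (qten v w) = qten (qten u v) w;
  qten_comm : forall u v, qten u v = qten v u;
  qten_unit : forall u, qten qk u = u;
  qten_sup : forall u (S : qcar -> Prop),
      qten u (qsup S) = qsup (fun w => exists s, S s /\ w = qten u s);
  qhom_adj : forall u v w, qle (qten u v) w <-> qle v (qhom u w)
}.

Arguments qle {q}.
Arguments qsup {q}.
Arguments qten {q}.
Arguments qk {q}.
Arguments qhom {q}.

Section QuantaleOps.
Variable V : quantale.

Definition qinf (S : V -> Prop) : V := qsup (fun x => forall s, S s -> qle x s).
Definition qbot : V := qsup (fun _ => False).
Definition qtop : V := qsup (fun _ => True).

End QuantaleOps.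

Arguments qinf {V}.
Arguments qbot {V}.
Arguments qtop {V}.

Definition nontrivial (V : quantale) : Prop := @qbot V <> @qtop V.

Section Relations.
Variable V : quantale.

Definition vrel (X Y : Type) := X -> Y -> V.

Definition rcomp {X Y Z : Type} (s : vrel Y Z) (r : vrel X Y) : vrel X Z :=
  fun x z => qsup (fun w => exists y, w = qten (r x y) (s y z)).

Definition rconv {X Y : Type} (r : vrel X Y) : vrel Y X := fun y x => r x y.

(* a function as a V-relation: k on its graph, bottom elsewhere *)
Definition rgraph {X Y : Type} (f : X -> Y) : vrel X Y :=
  fun x y => qsup (fun w => f x = y /\ w = qk).

Definition rle {X Y : Type} (r s : vrel X Y) : Prop :=
  forall x y, qle (r x y) (s x y).

Definition rlolli {X Y Z : Type} (r : vrel X Y) (s : vrel X Z) : vrel Z Y :=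
  fun z y => qinf (fun w => exists x, w = qhom (s x z) (r x y)).

Definition is_vcat {X : Type} (a : vrel X X) : Prop :=
  (forall x, qle qk (a x x)) /\
  (forall x y z, qle (qten (a x y) (a y z)) (a x z)).

Definition is_vfunctor {X Y : Type} (a : vrel X X) (b : vrel Y Y) (f : X -> Y) : Prop :=
  forall x y, qle (a x y) (b (f x) (f y)).

Definition vpow_hom (kappa : Type) : vrel (kappa -> V) (kappa -> V) :=
  fun f g => qinf (fun w => exists i, w = qhom (f i) (g i)).

End Relations.

Arguments vrel : clear implicits.
Arguments rcomp {V X Y Z}.
Arguments rconv {V X Y}.
Arguments rgraph {V X Y}.
Arguments rle {V X Y}.
Arguments rlolli {V X Y Z}.
Arguments is_vcat {V X}.
Arguments is_vfunctor {V X Y}.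

Record functor := Functor {
  fobj :> Type -> Type;
  fmap : forall (X Y : Type), (X -> Y) -> fobj X -> fobj Y;
  fmap_id : forall (X : Type) (x : fobj X), fmap (fun y : X => y) x = x;
  fmap_comp : forall (X Y Z : Type) (f : X -> Y) (g : Y -> Z) (x : fobj X),
      fmap (fun y => g (f y)) x = fmap g (fmap f x)
}.

Arguments fmap {f} {X Y} _ _ : rename.

Section LaxAndPred.
Variable V : quantale.
Variable F : functor.

Definition relop := forall X Y : Type, vrel V X Y -> vrel V (F X) (F Y).

Definition is_lax_ext (L : relop) : Prop :=
  (forall X Y (r r' : vrel V X Y), rle r r' -> rle (L X Y r) (L X Y r')) /\
  (forall X Y Z (r : vrel V X Y) (s : vrel V Y Z),
      rle (rcomp (L Y Z s) (L X Y r)) (L X Z (rcomp s r))) /\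
  (forall X Y (f : X -> Y),
      rle (rgraph (V:=V) (fmap (f:=F) f)) (L X Y (rgraph f)) /\
      rle (rconv (rgraph (V:=V) (fmap (f:=F) f))) (L Y X (rconv (rgraph f)))).

Definition lax_le (L1 L2 : relop) : Prop :=
  forall X Y (r : vrel V X Y), rle (L1 X Y r) (L2 X Y r).

(* a kappa-ary predicate lifting: natural transformation
   Set(-, V^kappa) -> Set(F-, V) *)
Record predlift := PredLift {
  pl_arity : Type;
  pl_comp : forall X : Type, (X -> pl_arity -> V) -> (F X -> V);
  pl_nat : forall (X Y : Type) (h : X -> Y) (f : Y -> pl_arity -> V) (z : F X),
      pl_comp (fun x => f (h x)) z = pl_comp f (fmap h z)
}.
Arguments pl_comp : clear implicits.
Arguments pl_comp p {X}.

Definition pl_monotone (l : predlift) : Prop :=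
  forall X (f g : X -> pl_arity l -> V),
    (forall x i, qle (f x i) (g x i)) ->
    forall z, qle (pl_comp l f z) (pl_comp l g z).

Definition pl_rel (l : predlift) (X : Type) (g : vrel V (pl_arity l) X)
  : vrel V unit (F X) :=
  fun _ z => pl_comp l (fun x i => g i x) z.

Definition plclass := predlift -> Prop.

Arguments pl_rel l {X}.

Definition monotone_class (L : plclass) : Prop :=
  forall l, L l -> pl_monotone l.

(* order of Pred(F)_M : reverse inclusion *)
Definition predM_le (L L' : plclass) : Prop := forall l, L' l -> L l.

(* object part of a lifting of F to Cat(V): the V-category structure
   on F|X| given one on |X| *)
Definition liftobj := forall X : Type, vrel V X X -> vrel V (F X) (F X).

Definition I_lift (L : relop) : liftobj := fun X a => L X X a.

Definition P_class (Fb : liftobj) : plclass := fun l =>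
  forall (X : Type) (a : vrel V X X), is_vcat a ->
    forall f : X -> (pl_arity l -> V),
      is_vfunctor a (@vpow_hom V (pl_arity l)) f ->
      is_vfunctor (Fb X a) (@qhom V) (pl_comp l f).

Definition M_class (L : plclass) : plclass := fun l => L l /\ pl_monotone l.

Definition MPI (L : relop) : plclass := M_class (P_class (I_lift L)).

Definition kantorovich (Lam : plclass) : relop := fun X Y r fx fy =>
  qinf (fun w => exists l, Lam l /\
     w = qinf (fun w' => exists g : vrel V (pl_arity l) X,
            w' = rlolli (pl_rel l (rcomp r g)) (pl_rel l g) fx fy)).

End LaxAndPred.

(* Main.v *)
Require Import Defs.
From Stdlib Require Import Setoid.

Section Q.
Variable V : quantale.

Lemma tr {u v w : V} : qle u v -> qle v w -> qle u w.
Proof. apply qle_trans. Qed.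
Lemma rf (u : V) : qle u u. Proof. apply qle_refl. Qed.

Lemma ten_monoR {u v : V} (w : V) : qle u v -> qle (qten w u) (qten w v).
Proof. intro H. apply qhom_adj. apply (tr H). apply qhom_adj. apply rf. Qed.
Lemma ten_monoL {u v : V} (w : V) : qle u v -> qle (qten u w) (qten v w).
Proof. intro H. rewrite (qten_comm u), (qten_comm v). apply ten_monoR, H. Qed.
Lemma ten_k_r (u : V) : qten u qk = u.
Proof. rewrite qten_comm. apply qten_unit. Qed.
Lemma eval (u v : V) : qle (qten u (qhom u v)) v.
Proof. apply qhom_adj, rf. Qed.
Lemma hom_le (A B B' : V) : qle qk A -> qle B B' -> qle (qhom A B) B'.
Proof. intros H1 H2. rewrite <- (qten_unit (qhom A B)).
  apply (tr (ten_monoL _ H1)). apply (tr (eval _ _)). exact H2. Qed.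
Lemma sup_ten_l (S : V -> Prop) (t c : V) :
  (forall s, S s -> qle (qten s t) c) -> qle (qten (qsup S) t) c.
Proof. intro H. rewrite qten_comm. apply qhom_adj, qsup_least. intros s Hs.
  apply qhom_adj. rewrite qten_comm. auto. Qed.
Lemma sup_ten_r (S : V -> Prop) (t c : V) :
  (forall s, S s -> qle (qten t s) c) -> qle (qten t (qsup S)) c.
Proof. intro H. apply qhom_adj, qsup_least. intros s Hs. apply qhom_adj. auto. Qed.
Lemma inf_lb (S : V -> Prop) s : S s -> qle (qinf S) s.
Proof. intro H. unfold qinf. apply qsup_least. intros x Hx. auto. Qed.
Lemma inf_glb (S : V -> Prop) u : (forall s, S s -> qle u s) -> qle u (qinf S).
Proof. intro H. unfold qinf. apply qsup_ub. auto. Qed.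
Lemma bot_r (t c : V) : qle (qten t qbot) c.
Proof. unfold qbot. apply sup_ten_r. intros s []. Qed.
Lemma bot_l (t c : V) : qle (qten qbot t) c.
Proof. unfold qbot. apply sup_ten_l. intros s []. Qed.

Lemma graph_ge A B (f : A -> B) x : qle qk (@rgraph V A B f x (f x)).
Proof. unfold rgraph. apply qsup_ub. split; reflexivity. Qed.
Lemma graph_le A B (f : A -> B) x y (c : V) : (f x = y -> qle qk c) -> qle (rgraph f x y) c.
Proof. intro H. unfold rgraph. apply qsup_least. intros s [H1 ->]. auto. Qed.
Lemma gid_l A (x x' : A) (t : A -> V) :
  qle (qten (rgraph (fun u => u) x x') (t x')) (t x).
Proof. unfold rgraph. apply sup_ten_l. intros s [H ->]. subst. rewrite qten_unit. apply rf. Qed.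
Lemma gid_r A (x x' : A) (t : A -> V) :
  qle (qten (t x) (rgraph (fun u => u) x x')) (t x').
Proof. unfold rgraph. apply sup_ten_r. intros s [H ->]. subst. rewrite ten_k_r. apply rf. Qed.

Lemma rcomp_ub X Y Z (r : vrel V X Y) (s : vrel V Y Z) x y z :
  qle (qten (r x y) (s y z)) (rcomp s r x z).
Proof. unfold rcomp. apply qsup_ub. exists y. reflexivity. Qed.
Lemma rcomp_le X Y Z (r : vrel V X Y) (s : vrel V Y Z) x z c :
  (forall y, qle (qten (r x y) (s y z)) c) -> qle (rcomp s r x z) c.
Proof. intro H. unfold rcomp. apply qsup_least. intros w [y ->]. auto. Qed.
Lemma ten_rcomp_le X Y Z (r : vrel V X Y) (s : vrel V Y Z) x z t c :
  (forall y, qle (qten t (qten (r x y) (s y z))) c) -> qle (qten t (rcomp s r x z)) c.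
Proof. intro H. unfold rcomp. apply sup_ten_r. intros w [y ->]. auto. Qed.
Lemma rcomp_ten_le X Y Z (r : vrel V X Y) (s : vrel V Y Z) x z t c :
  (forall y, qle (qten (qten (r x y) (s y z)) t) c) -> qle (qten (rcomp s r x z) t) c.
Proof. intro H. unfold rcomp. apply sup_ten_l. intros w [y ->]. auto. Qed.
Lemma rcomp_monoL X Y Z (r : vrel V X Y) (s s' : vrel V Y Z) :
  rle s s' -> rle (rcomp s r) (rcomp s' r).
Proof. intros H x z. apply rcomp_le. intro y. apply (tr (ten_monoR _ (H y z))). apply rcomp_ub. Qed.
Lemma rcomp_monoR X Y Z (r r' : vrel V X Y) (s : vrel V Y Z) :
  rle r r' -> rle (rcomp s r) (rcomp s r').
Proof. intros H x z. apply rcomp_le. intro y. apply (tr (ten_monoL _ (H x y))). apply rcomp_ub. Qed.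
Lemma rcomp_assoc_le X Y Z W (g : vrel V X Y) (r : vrel V Y Z) (s : vrel V Z W) :
  rle (rcomp s (rcomp r g)) (rcomp (rcomp s r) g).
Proof. intros i z. apply rcomp_le. intro y. apply rcomp_ten_le. intro x.
  rewrite <- qten_assoc. apply (tr (ten_monoR _ (rcomp_ub _ _ _ r s x y z))). apply rcomp_ub. Qed.

Lemma vfun_rcomp K X (a : vrel V X X) (f : X -> K -> V) :
  is_vfunctor a (@vpow_hom V K) f -> rle (rcomp a (fun i x => f x i)) (fun i x => f x i).
Proof. intros Hf i y. apply rcomp_le. intro x. apply qhom_adj.
  apply (tr (Hf x y)). unfold vpow_hom. apply inf_lb. exists i. reflexivity. Qed.

Variable F : functor.

Definition ev (l : predlift V F) {X} (g : vrel V (pl_arity l) X) (z : F X) : V :=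
  @pl_rel V F l X g tt z.

Lemma K_lb (Lam : plclass V F) X Y (r : vrel V X Y) fx fy l g : Lam l ->
  qle (kantorovich Lam r fx fy) (qhom (ev l g fx) (ev l (rcomp r g) fy)).
Proof. intro Hl. unfold kantorovich. eapply tr. apply inf_lb. exists l. split; [exact Hl|reflexivity].
  eapply tr. apply inf_lb. exists g. reflexivity. unfold rlolli. apply inf_lb. exists tt. reflexivity. Qed.

Lemma K_glb (Lam : plclass V F) X Y (r : vrel V X Y) fx fy u :
  (forall l g, Lam l -> qle (qten (ev l g fx) u) (ev l (rcomp r g) fy)) ->
  qle u (kantorovich Lam r fx fy).
Proof. intro H. unfold kantorovich. apply inf_glb. intros s [l [Hl ->]]. apply inf_glb.
  intros s [g ->]. unfold rlolli. apply inf_glb. intros s [[] ->]. apply qhom_adj. exact (H l g Hl). Qed.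

Lemma ev_mono l X (g g' : vrel V (pl_arity l) X) z : pl_monotone l -> rle g g' ->
  qle (ev l g z) (ev l g' z).
Proof. intros Hm H. unfold ev, pl_rel. apply Hm. intros. apply H. Qed.

Lemma part1 (Lam : plclass V F) : monotone_class Lam -> is_lax_ext (kantorovich Lam).
Proof.
  intro HM. split; [|split].
  - intros X Y r r' H z w. apply K_glb. intros l g Hl.
    apply (tr (ten_monoR _ (K_lb Lam _ _ r z w l g Hl))). apply (tr (eval _ _)).
    apply ev_mono; auto. apply rcomp_monoL; auto.
  - intros X Y Z r s x z. apply K_glb. intros l g Hl. apply ten_rcomp_le. intro y.
    rewrite qten_assoc. apply (tr (ten_monoL _ (tr (ten_monoR _ (K_lb Lam _ _ r x y l g Hl)) (eval _ _)))).
    apply (tr (ten_monoR _ (K_lb Lam _ _ s y z l (rcomp r g) Hl))). apply (tr (eval _ _)).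
    apply ev_mono; auto. apply rcomp_assoc_le.
  - intros X Y f. split.
    + intros z w. apply graph_le. intro H; subst w. apply K_glb. intros l g Hl.
      rewrite ten_k_r. unfold ev, pl_rel. rewrite <- pl_nat. apply HM; auto. intros x i.
      eapply tr; [|apply (rcomp_ub _ _ _ g (rgraph f) i x (f x))].
      rewrite <- (ten_k_r (g i x)) at 1. apply ten_monoR. apply graph_ge.
    + intros w z. unfold rconv. apply graph_le. intro H; subst w. apply K_glb. intros l g Hl.
      rewrite ten_k_r. unfold ev, pl_rel. rewrite <- pl_nat. apply HM; auto. intros x i.
      eapply tr; [|apply (rcomp_ub _ _ _ g (fun y x => rgraph f x y) i (f x) x)].
      rewrite <- (ten_k_r (g i (f x))) at 1. apply ten_monoR. apply graph_ge.
Qed.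

Lemma part2 (Lam Lam' : plclass V F) : predM_le Lam Lam' -> lax_le (kantorovich Lam) (kantorovich Lam').
Proof. intros H X Y r z w. apply K_glb. intros l g Hl.
  apply (tr (ten_monoR _ (K_lb Lam _ _ r z w l g (H l Hl)))). apply eval. Qed.

Lemma part3 (L1 L2 : relop V F) : lax_le L1 L2 -> predM_le (MPI L1) (MPI L2).
Proof. intros H l [HP Hm]. split; auto. intros X a Ha f Hf x y.
  apply (tr (H X X a x y)). apply HP; auto. Qed.

Lemma part4b (L : relop V F) (Lam : plclass V F) : monotone_class Lam ->
  lax_le L (kantorovich Lam) -> predM_le (MPI L) Lam.
Proof. intros HM H l Hl. split; auto. intros X a Ha f Hf x y. apply qhom_adj.
  change (@pl_comp V F l X f x) with (ev l (fun i x => f x i) x).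
  change (@pl_comp V F l X f y) with (ev l (fun i x => f x i) y).
  apply (tr (ten_monoR _ (H X X a x y))). apply (tr (ten_monoR _ (K_lb Lam _ _ a x y l (fun i x => f x i) Hl))).
  apply (tr (eval _ _)). apply ev_mono; auto. apply vfun_rcomp; auto. Qed.

Lemma lax_sq (L : relop V F) (HL : is_lax_ext L) X Y Z (r : vrel V X Y) (h1 : X -> Z) (h2 : Y -> Z)
  (a : vrel V Z Z) : (forall x y, qle (r x y) (a (h1 x) (h2 y))) ->
  forall z w, qle (L X Y r z w) (L Z Z a (fmap h1 z) (fmap h2 w)).
Proof.
  destruct HL as [L1 [L2 L3]]. intros Ha z w.
  assert (Hc : rle (rcomp (rgraph h2) (rcomp r (rconv (rgraph h1)))) a).
  { intros u v. apply rcomp_le. intro y. apply rcomp_ten_le. intro x. unfold rconv, rgraph.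
    apply sup_ten_r; intros s [H2 ->]. rewrite ten_k_r. apply sup_ten_l; intros s [H1 ->].
    rewrite qten_unit. subst. apply Ha. }
  eapply tr; [| apply (L1 _ _ _ _ Hc)].
  eapply tr; [| apply L2].
  eapply tr; [| eapply rcomp_monoR; apply L2].
  eapply tr; [| apply (rcomp_ub _ _ _ _ _ _ w _)].
  eapply tr; [| eapply ten_monoL; apply (rcomp_ub _ _ _ _ _ _ z _)].
  eapply tr; [| eapply ten_monoR; apply (proj1 (L3 _ _ h2) w (fmap h2 w))].
  eapply tr; [| eapply ten_monoR; apply graph_ge]. rewrite ten_k_r.
  eapply tr; [| eapply ten_monoL; apply (proj2 (L3 _ _ h1) (fmap h1 z) z)].
  unfold rconv. eapply tr; [| eapply ten_monoL; apply graph_ge]. rewrite qten_unit. apply rf.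
Qed.

Definition srel X Y (r : vrel V X Y) : vrel V (X + Y) (X + Y) := fun u v =>
  match u, v with
  | inl x, inl x' => rgraph (fun t => t) x x'
  | inl x, inr y => r x y
  | inr _, inl _ => qbot
  | inr y, inr y' => rgraph (fun t => t) y y'
  end.

Definition sfun K X Y (g : vrel V K X) (r : vrel V X Y) : X + Y -> K -> V := fun u =>
  match u with
  | inl x => fun i => g i x
  | inr y => fun i => rcomp r g i y
  end.
Arguments srel {X Y} r.
Arguments sfun {K X Y} g r.

Lemma srel_cat X Y (r : vrel V X Y) : is_vcat (srel r).
Proof. split.
  - intros [x|y]; simpl; apply graph_ge.
  - intros [x|y] [x'|y'] [x''|y'']; simpl.
    + apply (gid_l _ x x' (fun u => rgraph (fun t => t) u x'')).
    + apply (gid_l _ x x' (fun u => r u y'')).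
    + apply bot_r.
    + apply (gid_r _ y' y'' (fun u => r x u)).
    + apply bot_l.
    + apply bot_l.
    + apply bot_r.
    + apply (gid_l _ y y' (fun u => rgraph (fun t => t) u y'')).
Qed.

Lemma sfun_fun K X Y (g : vrel V K X) (r : vrel V X Y) : is_vfunctor (srel r) (@vpow_hom V K) (sfun g r).
Proof. intros [x|y] [x'|y']; simpl; unfold vpow_hom; apply inf_glb; intros s [i ->]; apply qhom_adj.
  - apply (gid_r _ x x' (fun u => g i u)).
  - apply rcomp_ub.
  - apply bot_r.
  - apply (gid_r _ y y' (fun u => rcomp r g i u)).
Qed.

Lemma part4a (L : relop V F) (Lam : plclass V F) : is_lax_ext L ->
  predM_le (MPI L) Lam -> lax_le L (kantorovich Lam).
Proof.
  intros HL H X Y r z w. apply K_glb. intros l g Hl. destruct (H l Hl) as [HP Hm].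
  pose proof (HP (X+Y)%type (srel r) (srel_cat _ _ r) (sfun g r) (sfun_fun _ _ _ g r) (fmap inl z) (fmap inr w)) as K.
  unfold I_lift in K.
  change (ev l g z) with (@pl_comp V F l X (fun x => sfun g r (inl x)) z).
  change (ev l (rcomp r g) w) with (@pl_comp V F l Y (fun y => sfun g r (inr y)) w).
  rewrite (@pl_nat V F l X (X+Y)%type inl (sfun g r) z).
  rewrite (@pl_nat V F l Y (X+Y)%type inr (sfun g r) w).
  apply (tr (ten_monoR _ (lax_sq L HL _ _ _ r inl inr (srel r) (fun x y => rf _) z w))).
  apply (tr (ten_monoR _ K)). apply eval.
Qed.

Lemma lax_nat (L : relop V F) (HL : is_lax_ext L) K X Y (h : X -> Y) (f : Y -> K -> V) (z : F X) (Xi : F K) :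
  L K X (fun i x => f (h x) i) Xi z = L K Y (fun i y => f y i) Xi (fmap h z).
Proof.
  destruct HL as [L1 [L2 L3]].
  assert (Hle1 : rle (rcomp (rgraph h) (fun i x => f (h x) i)) (fun i y => f y i)).
  { intros i y; apply rcomp_le; intro x; unfold rgraph; apply sup_ten_r; intros s [E ->]; subst;
    rewrite ten_k_r; apply rf. }
  assert (Hle2 : rle (rcomp (rconv (rgraph h)) (fun i y => f y i)) (fun i x => f (h x) i)).
  { intros i x; apply rcomp_le; intro y; unfold rconv, rgraph; apply sup_ten_r; intros s [E ->]; subst;
    rewrite ten_k_r; apply rf. }
  apply qle_antisym.
  - eapply tr; [| apply (L1 _ _ _ _ Hle1)]. eapply tr; [| apply L2].
    eapply tr; [| apply (rcomp_ub _ _ _ _ _ _ z _)].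
    eapply tr; [| eapply ten_monoR; apply (proj1 (L3 _ _ h) z (fmap h z))].
    eapply tr; [| eapply ten_monoR; apply graph_ge]. rewrite ten_k_r; apply rf.
  - eapply tr; [| apply (L1 _ _ _ _ Hle2)]. eapply tr; [| apply L2].
    eapply tr; [| apply (rcomp_ub _ _ _ _ _ _ (fmap h z) _)].
    eapply tr; [| eapply ten_monoR; apply (proj2 (L3 _ _ h) (fmap h z) z)].
    unfold rconv. eapply tr; [| eapply ten_monoR; apply graph_ge]. rewrite ten_k_r; apply rf.
Qed.

Definition yl (L : relop V F) (HL : is_lax_ext L) K (Xi : F K) : predlift V F :=
  @PredLift V F K (fun Y f z => L K Y (fun i y => f y i) Xi z)
    (fun X Y h f z => lax_nat L HL K X Y h f z Xi).

Lemma rep (L : relop V F) (HL : is_lax_ext L) : lax_le (kantorovich (MPI L)) L.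
Proof.
  intros X Y r z w.
  assert (Hl : MPI L (yl L HL X z)).
  { destruct HL as [L1 [L2 L3]]. split.
    - intros Z a Ha f Hf y y'. simpl. apply qhom_adj.
      apply (tr (rcomp_ub _ _ _ _ _ _ _ _)). apply (tr (L2 _ _ _ _ _ _ _)). apply L1.
      apply vfun_rcomp; auto.
    - intros Y' f g Hfg u. simpl. apply L1. intros i y. apply Hfg. }
  eapply tr. apply (K_lb (MPI L) _ _ r z w (yl L HL X z) (rgraph (fun x : X => x)) Hl).
  destruct HL as [L1 [L2 L3]].
  apply hom_le.
  - unfold ev, pl_rel. simpl. eapply tr; [apply (graph_ge _ _ (fmap (fun x:X => x)) z) |].
    rewrite fmap_id. apply (proj1 (L3 _ _ (fun x => x))).
  - unfold ev, pl_rel; simpl. apply L1. intros i y. apply rcomp_le. intro x.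
    apply (gid_l _ i x (fun u => r u y)).
Qed.

Lemma part5 (L1 L2 : relop V F) : is_lax_ext L1 -> is_lax_ext L2 ->
  predM_le (MPI L1) (MPI L2) -> lax_le L1 L2.
Proof. intros H1 H2 H X Y r z w. eapply tr. apply (part4a L1 (MPI L2) H1 H). apply rep; auto. Qed.

End Q.

Theorem corollary3 (V : quantale) (HV : nontrivial V) (F : functor) :
  (forall Lam : plclass V F, monotone_class Lam -> is_lax_ext (kantorovich Lam))
  /\ (forall Lam Lam' : plclass V F, monotone_class Lam -> monotone_class Lam' ->
        predM_le Lam Lam' -> lax_le (kantorovich Lam) (kantorovich Lam'))
  /\ (forall L1 L2 : relop V F, is_lax_ext L1 -> is_lax_ext L2 ->
        lax_le L1 L2 -> predM_le (MPI L1) (MPI L2))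
  /\ (forall (L : relop V F) (Lam : plclass V F), is_lax_ext L -> monotone_class Lam ->
        (predM_le (MPI L) Lam <-> lax_le L (kantorovich Lam)))
  /\ (forall L1 L2 : relop V F, is_lax_ext L1 -> is_lax_ext L2 ->
        predM_le (MPI L1) (MPI L2) -> lax_le L1 L2).
Proof.
  split; [|split; [|split; [|split]]].
  - intros Lam H. apply part1; auto.
  - intros Lam Lam' _ _ H. apply part2; auto.
  - intros L1 L2 _ _ H. apply part3; auto.
  - intros L Lam HL HM. split; [apply part4a; auto | apply part4b; auto].
  - intros L1 L2 H1 H2 H. apply (part5 _ _ L1 L2); auto.
Qed.
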